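(* Consider the SDP pair and one-step ADMM in the context, under the standing assumptions, and suppose $Z^{(k)}\to Z_\star=X_\star-\sigma S_\star$ where $(X_\star,y_\star,S_\star)$ is a KKT point with $\operatorname{rank}X_\star+\operatorname{rank}S_\star=n$. Suppose moreover primal nondegeneracy $\mathcal N_{X_\star}\cap\mathcal R(\mathcal A^* )=\{0\}$ and dual nondegeneracy $\mathcal N_{S_\star}\cap\mathcal N(\mathcal A)=\{0\}$ hold. Then for any $\rho\in(\|\mathcal M\|_{\mathrm{op}},1)$ there exists $\bar k_{\mathrm{ND}}\in\mathbb N$ such that for every integer $k\ge\bar k_{\mathrm{ND}}$, $\|Z^{(k+1)}-Z_\star\|_F\le\rho\|Z^{(k)}-Z_\star\|_F$.
   Context: $\mathbb S^n$: real symmetric $n\times n$ matrices, $\langle X,Y\rangle=\operatorname{tr}(XY)$, Frobenius norm $\|\cdot\|_F$; $\Pi_{\mathbb S^n_+}$ the projection onto the PSD cone. Data $C,A_1,\dots,A_m\in\mathbb S^n$, $b\in\mathbb R^m$; $\mathcal AX=(\langle A_i,X\rangle)_{i=1}^m$, $\mathcal A^*y=\sum_iy_iA_i$; $\mathcal R(\mathcal A^* )$ its range and $\mathcal N(\mathcal A)$ the null space of $\mathcal A$. Primal: minimize $\langle C,X\rangle$ s.t. $\mathcal AX=b$, $X\succeq0$; dual: maximize $b^\top y$ s.t. $\mathcal A^*y+S=C$, $S\succeq0$. KKT point: $(X,y,S)$ with $\mathcal AX=b$, $\mathcal A^*y+S=C$, $\langle X,S\rangle=0$, $X,S\succeq0$.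 Standing assumptions: $\mathcal A$ surjective and KKT set nonempty. $\mathcal P=\mathcal A^*(\mathcal A\mathcal A^* )^{-1}\mathcal A$, $\mathcal P^\perp=\mathrm{Id}-\mathcal P$. For $\sigma>0$, $Z^{(0)}\in\mathbb S^n$, one-step ADMM: $Z^{(k+1)}=\mathcal P(-2\Pi_{\mathbb S^n_+}(Z^{(k)})+Z^{(k)})+\Pi_{\mathbb S^n_+}(Z^{(k)})+\mathcal A^*(\mathcal A\mathcal A^* )^{-1}b+\sigma\mathcal PC-\sigma C$. There is an orthogonal $Q_\star$ with $Z_\star=Q_\star\operatorname{diag}(\lambda_1,\dots,\lambda_n)Q_\star^\top$, $\lambda_1\ge\dots\ge\lambda_r>0>\lambda_{r+1}\ge\dots\ge\lambda_n$, $r=\operatorname{rank}X_\star$, $X_\star=Q_\star\operatorname{diag}(\lambda_1,\dots,\lambda_r,0,\dots,0)Q_\star^\top$, $\sigma S_\star=Q_\star\operatorname{diag}(0,\dots,0,-\lambda_{r+1},\dots,-\lambda_n)Q_\star^\top$. $\mathcal N_{X_\star}=\{Q_\star\begin{pmatrix}0&0\\0&D\end{pmatrix}Q_\star^\top:D\in\mathbb S^{n-r}\}$, $\mathcal N_{S_\star}=\{Q_\star\begin{pmatrix}A&0\\0&0\end{pmatrix}Q_\star^\top:A\in\mathbb S^{r}\}$. $\Theta\in\mathbb R^{(n-r)\times r}$, $\Theta_{ij}=\lambda_j/(\lambda_j-\lambda_{i+r})$; $\Omega=\begin{pmatrix}E_r&\Theta^\top\\\Theta&0\end{pmatrix}$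 ($E_r$ all-ones). With $\circ$ the Hadamard product, $\mathcal D(H)=Q_\star(\Omega\circ(Q_\star^\top HQ_\star))Q_\star^\top$, $\mathcal D^\perp(H)=H-\mathcal D(H)$, $\mathcal M(H)=\mathcal P\mathcal D^\perp(H)+\mathcal P^\perp\mathcal D(H)$; $\|\cdot\|_{\mathrm{op}}$ is the operator norm induced by $\|\cdot\|_F$. *)

(* Defs.v *)
From HB Require Import structures.
From mathcomp Require Import all_boot all_order all_algebra.
From mathcomp Require Import all_classical all_reals all_analysis.
Set Implicit Arguments. Unset Strict Implicit. Unset Printing Implicit Defensive.
Import Order.TTheory GRing.Theory Num.Theory.
Local Open Scope classical_set_scope.
Local Open Scope ring_scope.

Section SDP.
Variable R : realType.

Definition inprod n (X Y : 'M[R]_n) : R := \tr (X *m Y).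
Definition frob n (X : 'M[R]_n) : R := Num.sqrt (\tr (X^T *m X)).
Definition symm n (X : 'M[R]_n) : Prop := X^T = X.
Definition psd n (X : 'M[R]_n) : Prop :=
  symm X /\ forall v : 'cV[R]_n, 0 <= (v^T *m X *m v) 0 0.

Definition projPSD n (Z : 'M[R]_n) : 'M[R]_n :=
  xget 0 [set P | psd P /\ forall Q, psd Q -> frob (Z - P) <= frob (Z - Q)].

Definition Aop n m (As : 'I_m -> 'M[R]_n) (X : 'M[R]_n) : 'cV[R]_m :=
  \col_i inprod (As i) X.
Definition Aadj n m (As : 'I_m -> 'M[R]_n) (y : 'cV[R]_m) : 'M[R]_n :=
  \sum_i y i 0 *: As i.
(* matrix of A Aadj *)
Definition gram n m (As : 'I_m -> 'M[R]_n) : 'M[R]_m :=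
  \matrix_(i, j) inprod (As i) (As j).
Definition Pop n m (As : 'I_m -> 'M[R]_n) (H : 'M[R]_n) : 'M[R]_n :=
  Aadj As (invmx (gram As) *m Aop As H).
Definition Pperp n m (As : 'I_m -> 'M[R]_n) (H : 'M[R]_n) : 'M[R]_n :=
  H - Pop As H.

Definition admm_step n m (As : 'I_m -> 'M[R]_n) (b : 'cV[R]_m) (C : 'M[R]_n)
  (sigma : R) (Z : 'M[R]_n) : 'M[R]_n :=
  Pop As (- (2%:R *: projPSD Z) + Z) + projPSD Z
  + Aadj As (invmx (gram As) *m b) + sigma *: Pop As C - sigma *: C.

Definition A_surj n m (As : 'I_m -> 'M[R]_n) : Prop :=
  forall y : 'cV[R]_m, exists X, symm X /\ Aop As X = y.

Definition KKT n m (As : 'I_m -> 'M[R]_n) (b : 'cV[R]_m) (C : 'M[R]_n)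
  (X : 'M[R]_n) (y : 'cV[R]_m) (S : 'M[R]_n) : Prop :=
  [/\ Aop As X = b, Aadj As y + S = C, inprod X S = 0, psd X & psd S].

(* Omega = [[E_r, Theta^T]; [Theta, 0]], Theta_{ij} = lam_j/(lam_j - lam_{i+r}),
   written entrywise with 0-based indices *)
Definition Omega n (r : nat) (lam : 'I_n -> R) : 'M[R]_n :=
  \matrix_(a, b)
    if (a < r)%N && (b < r)%N then 1
    else if (r <= a)%N && (b < r)%N then lam b / (lam b - lam a)
    else if (a < r)%N && (r <= b)%N then lam a / (lam a - lam b)
    else 0.

Definition hadamard n (A B : 'M[R]_n) : 'M[R]_n := \matrix_(i, j) (A i j * B i j).

Definition Dop n (Q : 'M[R]_n) (r : nat) (lam : 'I_n -> R) (H : 'M[R]_n) : 'M[R]_n :=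
  Q *m hadamard (Omega r lam) (Q^T *m H *m Q) *m Q^T.
Definition Dperp n (Q : 'M[R]_n) (r : nat) (lam : 'I_n -> R) (H : 'M[R]_n) : 'M[R]_n :=
  H - Dop Q r lam H.
Definition Mop n m (As : 'I_m -> 'M[R]_n) (Q : 'M[R]_n) (r : nat) (lam : 'I_n -> R)
  (H : 'M[R]_n) : 'M[R]_n :=
  Pop As (Dperp Q r lam H) + Pperp As (Dop Q r lam H).

Definition opnorm n (L : 'M[R]_n -> 'M[R]_n) : R :=
  sup [set frob (L H) | H in [set H : 'M[R]_n | symm H /\ frob H <= 1]].

(* N_{X*} = { Q [[0,0],[0,D]] Q^T : D in S^{n-r} } *)
Definition in_NX n (Q : 'M[R]_n) (r : nat) (H : 'M[R]_n) : Prop :=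
  exists W : 'M[R]_n, [/\ symm W,
    (forall a b : 'I_n, (a < r)%N || (b < r)%N -> W a b = 0) &
    H = Q *m W *m Q^T].
(* N_{S*} = { Q [[A,0],[0,0]] Q^T : A in S^r } *)
Definition in_NS n (Q : 'M[R]_n) (r : nat) (H : 'M[R]_n) : Prop :=
  exists W : 'M[R]_n, [/\ symm W,
    (forall a b : 'I_n, (r <= a)%N || (r <= b)%N -> W a b = 0) &
    H = Q *m W *m Q^T].

End SDP.

(* Main.v *)
Require Import Defs.
From HB Require Import structures.
From mathcomp Require Import all_boot all_order all_algebra.
From mathcomp Require Import all_classical all_reals all_analysis.
From mathcomp Require Import ring lra.
Import Order.TTheory GRing.Theory Num.Theory.
Import numFieldNormedType.Exports.
Local Open Scope classical_set_scope.
Local Open Scope ring_scope.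
Set Implicit Arguments. Unset Strict Implicit. Unset Printing Implicit Defensive.

Section P1.
Variable R : realType.
Variable n : nat.
Implicit Types X Y W : 'M[R]_n.

Definition ip X Y : R := \tr (X^T *m Y).

Lemma ipE X Y : ip X Y = \sum_i \sum_j X i j * Y i j.
Proof.
rewrite /ip /mxtrace exchange_big /=; apply: eq_bigr => j _.
by rewrite !mxE; apply: eq_bigr => i _; rewrite !mxE.
Qed.

Lemma ipC X Y : ip X Y = ip Y X.
Proof. by rewrite !ipE; apply: eq_bigr => i _; apply: eq_bigr => j _; rewrite mulrC. Qed.

Lemma ipDr X Y W : ip X (Y + W) = ip X Y + ip X W.
Proof. by rewrite /ip mulmxDr mxtraceD. Qed.
Lemma ipDl X Y W : ip (Y + W) X = ip Y X + ip W X.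
Proof. by rewrite ipC ipDr !(ipC X). Qed.
Lemma ipZr a X Y : ip X (a *: Y) = a * ip X Y.
Proof. by rewrite /ip -scalemxAr mxtraceZ. Qed.
Lemma ipZl a X Y : ip (a *: Y) X = a * ip Y X.
Proof. by rewrite ipC ipZr ipC. Qed.
Lemma ipNr X Y : ip X (- Y) = - ip X Y.
Proof. by rewrite -scaleN1r ipZr mulN1r. Qed.
Lemma ipNl X Y : ip (- Y) X = - ip Y X.
Proof. by rewrite ipC ipNr ipC. Qed.
Lemma ipBr X Y W : ip X (Y - W) = ip X Y - ip X W.
Proof. by rewrite ipDr ipNr. Qed.
Lemma ipBl X Y W : ip (Y - W) X = ip Y X - ip W X.
Proof. by rewrite ipDl ipNl. Qed.
Lemma ip0r X : ip X 0 = 0.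
Proof. by rewrite -(scale0r 0) ipZr mul0r. Qed.
Lemma ip0l X : ip 0 X = 0.
Proof. by rewrite ipC ip0r. Qed.

Lemma ip_ge0 X : 0 <= ip X X.
Proof. by rewrite ipE; apply: sumr_ge0 => i _; apply: sumr_ge0 => j _; apply: mulr_ge0_le0 || rewrite -expr2 sqr_ge0. Qed.

Lemma ip_eq0 X : ip X X = 0 -> X = 0.
Proof.
rewrite ipE => /eqP; rewrite psumr_eq0; last first.
  by move=> i _; apply: sumr_ge0 => j _; rewrite -expr2 sqr_ge0.
move=> /allP H; apply/matrixP => i j; rewrite mxE.
have /implyP := H i (mem_index_enum _) => /(_ isT).
rewrite psumr_eq0; last by move=> k _; rewrite -expr2 sqr_ge0.
move=> /allP /(_ j (mem_index_enum _)) /implyP /(_ isT).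
by rewrite mulf_eq0 orbb => /eqP.
Qed.

Lemma frob_sqr X : frob X ^+ 2 = ip X X.
Proof. by rewrite /frob sqr_sqrtr // ip_ge0. Qed.
Lemma frob_ge0 X : 0 <= frob X.
Proof. exact: sqrtr_ge0. Qed.
Lemma frob_eq0 X : frob X = 0 -> X = 0.
Proof. by move=> H; apply: ip_eq0; rewrite -frob_sqr H expr0n. Qed.
Lemma frob0 : frob (0 : 'M[R]_n) = 0.
Proof. by rewrite /frob -/(ip 0 0) ip0r sqrtr0. Qed.

Lemma frob_le X Y : ip X X <= ip Y Y -> frob X <= frob Y.
Proof. by move=> H; rewrite /frob ler_sqrt // ip_ge0. Qed.
Lemma frob_leE X Y : (frob X <= frob Y) = (ip X X <= ip Y Y).
Proof. by rewrite -!frob_sqr ler_sqr ?nnegrE ?frob_ge0. Qed.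

Lemma frobZ a X : frob (a *: X) = `|a| * frob X.
Proof.
rewrite /frob -/(ip _ _) -/(ip X X) ipZl ipZr mulrA -expr2 sqrtrM ?sqr_ge0 //.
by rewrite sqrtr_sqr.
Qed.
Lemma frobN X : frob (- X) = frob X.
Proof. by rewrite -scaleN1r frobZ normrN normr1 mul1r. Qed.

Lemma ip_amgm s X Y : 0 < s -> 2 * ip X Y <= s * ip X X + s^-1 * ip Y Y.
Proof.
move=> s0; have := ip_ge0 (s *: X - Y).
rewrite ipBl !ipBr !ipZl !ipZr (ipC Y X) => H.
have H2 : 0 <= s^-1 * (s * (s * ip X X) - s * ip X Y - (s * ip X Y - ip Y Y)).
  by rewrite mulr_ge0 // invr_ge0 ltW.
rewrite !mulrBr !mulrA mulVf ?gt_eqF // !mul1r in H2.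
by rewrite -subr_ge0; apply: le_trans H2 _; rewrite le_eqVlt; apply/orP; left; apply/eqP; ring.
Qed.

Lemma cauchy_schwarz X Y : ip X Y <= frob X * frob Y.
Proof.
have [X0|Xn0] := eqVneq (frob X) 0.
  by rewrite (frob_eq0 X0) ip0l frob0 mul0r.
have [Y0|Yn0] := eqVneq (frob Y) 0.
  by rewrite (frob_eq0 Y0) ip0r frob0 mulr0.
have fX : 0 < frob X by rewrite lt_neqAle eq_sym Xn0 frob_ge0.
have fY : 0 < frob Y by rewrite lt_neqAle eq_sym Yn0 frob_ge0.
have := ip_amgm X Y (divr_gt0 fY fX).
rewrite -!frob_sqr invf_div => H.
have E : frob Y / frob X * frob X ^+ 2 + frob X / frob Y * frob Y ^+ 2 = 2 * (frob X * frob Y).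
  by field; rewrite Xn0 Yn0.
rewrite E in H. by rewrite -(@ler_pM2l _ 2) //.
Qed.

Lemma ip_abs X Y : `|ip X Y| <= frob X * frob Y.
Proof.
rewrite ler_norml cauchy_schwarz andbT lerNl -ipNl.
by apply: le_trans (cauchy_schwarz _ _) _; rewrite frobN.
Qed.

Lemma frobD X Y : frob (X + Y) <= frob X + frob Y.
Proof.
rewrite -(ler_pXn2r (n:=2)) // ?nnegrE ?addr_ge0 ?frob_ge0 //.
rewrite frob_sqr ipDl !ipDr (ipC Y X) sqrrD -!frob_sqr.
have := cauchy_schwarz X Y; lra.
Qed.

Lemma frobB X Y : frob (X - Y) <= frob X + frob Y.
Proof. by rewrite -(frobN Y); apply: frobD. Qed.

Lemma entry_le_frob X i j : `|X i j| <= frob X.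
Proof.
rewrite -(ler_pXn2r (n:=2)) // ?nnegrE ?frob_ge0 // frob_sqr ipE real_normK ?num_real //.
rewrite (bigD1 i) //= (bigD1 j) //= -expr2 -addrA lerDl.
rewrite addr_ge0 // ?sumr_ge0 // => k _; rewrite -?expr2 ?sqr_ge0 //.
by apply: sumr_ge0 => l _; rewrite -expr2 sqr_ge0.
Qed.

Lemma frob_sum I (s : seq I) (F : I -> 'M[R]_n) :
  frob (\sum_(i <- s) F i) <= \sum_(i <- s) frob (F i).
Proof.
elim: s => [|a s IH]; first by rewrite !big_nil frob0.
rewrite !big_cons; apply: le_trans (frobD _ _) _; by rewrite lerD2l.
Qed.

Lemma frob_delta i j : frob (delta_mx i j : 'M[R]_n) = 1.
Proof.
rewrite /frob -/(ip _ _) ipE (bigD1 i) //= (bigD1 j) //= !mxE !eqxx mulr1.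
rewrite big1 ?addr0; last by move=> k kj; rewrite !mxE (negbTE kj) andbF mulr0.
rewrite big1 ?addr0 ?sqrtr1 //; move=> k ki; apply: big1 => l _.
by rewrite !mxE (negbTE ki) mulr0.
Qed.

Lemma frob_le_sum X : frob X <= \sum_i \sum_j `|X i j|.
Proof.
rewrite {1}(matrix_sum_delta X); apply: le_trans (frob_sum _ _) _.
apply: ler_sum => i _; apply: le_trans (frob_sum _ _) _.
by apply: ler_sum => j _; rewrite frobZ frob_delta mulr1.
Qed.

Lemma linear_bound (f : 'M[R]_n -> 'M[R]_n) :
  (forall X Y, f (X + Y) = f X + f Y) -> (forall a X, f (a *: X) = a *: f X) ->
  exists K, 0 <= K /\ forall X, frob (f X) <= K * frob X.
Proof.
move=> fD fZ.
have f0 : f 0 = 0 by have := fZ 0 0; rewrite !scale0r.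
have fS I (s : seq I) (F : I -> 'M[R]_n) : f (\sum_(i <- s) F i) = \sum_(i <- s) f (F i).
  by elim: s => [|a s IH]; rewrite ?big_nil ?f0 // !big_cons fD IH.
exists (\sum_i \sum_j frob (f (delta_mx i j))); split.
  by apply: sumr_ge0 => i _; apply: sumr_ge0 => j _; apply: frob_ge0.
move=> X; rewrite {1}(matrix_sum_delta X) fS mulr_suml.
apply: le_trans (frob_sum _ _) _; apply: ler_sum => i _.
rewrite fS mulr_suml; apply: le_trans (frob_sum _ _) _; apply: ler_sum => j _.
rewrite fZ frobZ [X in X <= _]mulrC ler_wpM2l ?frob_ge0 //; exact: entry_le_frob.
Qed.

End P1.

Section P2.
Variable R : realType.
Variable n : nat.
Implicit Types X Y W P Q Z : 'M[R]_n.

Lemma trD (A B : 'M[R]_n) : (A + B)^T = A^T + B^T. Proof. by rewrite linearD. Qed.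
Lemma trN (A : 'M[R]_n) : (- A)^T = - A^T. Proof. by rewrite linearN. Qed.
Lemma trZ a (A : 'M[R]_n) : (a *: A)^T = a *: A^T. Proof. by rewrite linearZ. Qed.
Lemma trB (A B : 'M[R]_n) : (A - B)^T = A^T - B^T. Proof. by rewrite trD trN. Qed.

Lemma t_lemma (a c : R) : (forall t, 0 < t -> t <= 1 -> a <= t * c) -> a <= 0.
Proof.
move=> H; rewrite leNgt; apply/negP => a0.
have c1 := H 1 ltr01 (lexx _); rewrite mul1r in c1.
have c0 : 0 < c by apply: lt_le_trans c1.
have t0 : 0 < a / (2 * c) by rewrite divr_gt0 ?mulr_gt0.
have t1 : a / (2 * c) <= 1.
  by rewrite ler_pdivrMr ?mulr_gt0 // mul1r; lra.
have := H _ t0 t1.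
have -> : a / (2 * c) * c = a / 2 by field; rewrite gt_eqF.
lra.
Qed.

Lemma qformD (v : 'cV[R]_n) X Y :
  (v^T *m (X + Y) *m v) 0 0 = (v^T *m X *m v) 0 0 + (v^T *m Y *m v) 0 0.
Proof. by rewrite mulmxDr mulmxDl mxE. Qed.
Lemma qformZ (v : 'cV[R]_n) a X :
  (v^T *m (a *: X) *m v) 0 0 = a * (v^T *m X *m v) 0 0.
Proof. by rewrite -scalemxAr -scalemxAl mxE. Qed.

Lemma qformB (v : 'cV[R]_n) X Y :
  (v^T *m (X - Y) *m v) 0 0 = (v^T *m X *m v) 0 0 - (v^T *m Y *m v) 0 0.
Proof. by rewrite -scaleN1r qformD qformZ mulN1r. Qed.

Lemma psd0 : psd (0 : 'M[R]_n).
Proof. by split; [rewrite /symm trmx0 | move=> v; rewrite mulmx0 mul0mx mxE]. Qed.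

Lemma psd_conv P Q t : psd P -> psd Q -> 0 <= t -> t <= 1 -> psd (P + t *: (Q - P)).
Proof.
move=> [sP qP] [sQ qQ] t0 t1; split.
  by rewrite /symm trD trZ trD trN sP sQ.
move=> v; rewrite qformD qformZ qformB.
have := qP v; have := qQ v; nra.
Qed.

Lemma psd_cong P (M : 'M[R]_n) : psd P -> psd (M^T *m P *m M).
Proof.
move=> [sP qP]; split.
  by rewrite /symm !trmx_mul trmxK sP mulmxA.
by move=> v; rewrite !mulmxA -trmx_mul -!mulmxA (mulmxA P); have := qP (M *m v); rewrite !mulmxA.
Qed.

Lemma tr_delta (A : 'M[R]_n) i j : \tr (A *m delta_mx j i) = A i j.
Proof.
rewrite /mxtrace (bigD1 i) //= big1 ?addr0; last first.
  move=> k ki; rewrite mxE big1 // => l _; rewrite mxE (negbTE ki) andbF mulr0.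
  by [].
rewrite mxE (bigD1 j) //= big1 ?addr0; last first.
  by move=> l lj; rewrite mxE (negbTE lj) mulr0.
by rewrite mxE !eqxx mulr1.
Qed.

Definition is_proj Z P := psd P /\ forall Q, psd Q -> frob (Z - P) <= frob (Z - Q).

Lemma proj_VI Z P : is_proj Z P -> forall Q, psd Q -> ip (Z - P) (Q - P) <= 0.
Proof.
move=> [pP minP] Q pQ.
rewrite -(@ler_pM2l _ 2) // mulr0.
apply: (t_lemma (c := ip (Q - P) (Q - P))) => t t0 t1.
have := minP _ (psd_conv pP pQ (ltW t0) t1).
rewrite frob_leE.
have -> : Z - (P + t *: (Q - P)) = (Z - P) - t *: (Q - P) by rewrite opprD addrA.
move: (Z - P) (Q - P) => A B.
rewrite ipBl !ipBr !ipZl !ipZr (ipC B A) => H.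
have : 0 <= t * (t * ip B B - 2 * ip A B) by lra.
rewrite pmulr_rge0 //; lra.
Qed.

Lemma proj_compl Z P : symm Z -> is_proj Z P -> P *m (P - Z) = 0.
Proof.
move=> sZ [pP minP].
have VI := proj_VI (conj pP minP).
set N := P - Z.
have sN : N^T = N by rewrite /N trD trN sZ (proj1 pP).
have key W : ip N (W^T *m P + P *m W) <= 0.
  apply: (t_lemma (c := ip N (W^T *m P *m W))) => t t0 t1.
  have := VI _ (psd_cong (1%:M - t *: W) pP).
  have -> : (1%:M - t *: W)^T *m P *m (1%:M - t *: W) - P
      = - (t *: (W^T *m P + P *m W)) + (t * t) *: (W^T *m P *m W).
    rewrite trD trN trZ trmx1 !(mulmxDl, mulmxDr) !mulmxN !mulNmx !mul1mx !mulmx1.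
    rewrite -!scalemxAl -!scalemxAr !scalerA scalerDr.
    move: (t *: (W^T *m P)) (t *: (P *m W)) ((t * t) *: (W^T *m P *m W)) => a b c.
    by rewrite addrAC [P - a - P]addrAC subrr add0r opprK opprD addrA.
  have -> : Z - P = - N by rewrite /N opprB.
  rewrite ipNl ipDr ipNr ipZr ipZr => H.
  have : 0 <= t * (t * ip N (W^T *m P *m W) - ip N (W^T *m P + P *m W)) by lra.
  rewrite pmulr_rge0 //; lra.
have tr0 W : \tr (N *m P *m W) = 0.
  have E : ip N (W^T *m P + P *m W) = 2 * \tr (N *m P *m W).
    rewrite /ip sN mulmxDr mxtraceD.
    have -> : \tr (N *m (W^T *m P)) = \tr (N *m P *m W).
      rewrite -mxtrace_tr !trmx_mul (proj1 pP) trmxK sN mxtrace_mulC !mulmxA.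
      by [].
    by rewrite mulmxA mulr2n mulrDl mul1r.
  have E2 : ip N ((- W)^T *m P + P *m (- W)) = - ip N (W^T *m P + P *m W).
    by rewrite trN mulNmx mulmxN -opprD ipNr.
  have k1 := key W; have k2 := key (- W); rewrite E2 E in k2; rewrite E in k1.
  lra.
have NP0 : N *m P = 0.
  by apply/matrixP => i j; rewrite -tr_delta tr0 mxE.
have -> : P *m (P - Z) = (N *m P)^T by rewrite trmx_mul sN (proj1 pP).
by rewrite NP0 trmx0.
Qed.

End P2.

Section P3.
Variable R : realType.
Variable n : nat.
Local Notation V := 'rV[R]_(n * n).

Lemma contD (f g : V -> R) : continuous f -> continuous g -> continuous (fun x => f x + g x).
Proof. move=> cf cg x; apply: continuousD; [exact: cf|exact: cg]. Qed.
Lemma contM (f g : V -> R) : continuous f -> continuous g -> continuous (fun x => f x * g x).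
Proof. move=> cf cg x; apply: continuousM; [exact: cf|exact: cg]. Qed.
Lemma contC (c : R) : continuous (fun _ : V => c).
Proof. exact: cst_continuous. Qed.
Lemma contN (f : V -> R) : continuous f -> continuous (fun x => - f x).
Proof. move=> cf x; apply: continuousN; exact: cf. Qed.
Lemma contE k : continuous (fun v : V => v 0 k).
Proof. exact: coord_continuous. Qed.
Lemma contS (I : Type) (s : seq I) (F : I -> V -> R) :
  (forall i, continuous (F i)) -> continuous (fun v => \sum_(i <- s) F i v).
Proof.
move=> cF; elim: s => [|a s IH].
  by under eq_fun do rewrite big_nil; apply: contC.
by under eq_fun do rewrite big_cons; apply: contD.
Qed.

Lemma contVE i j : continuous (fun v : V => vec_mx v i j).
Proof. by under eq_fun do rewrite mxE; apply: contE. Qed.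


Definition gZ (Z : 'M[R]_n) (v : V) := ip (Z - vec_mx v) (Z - vec_mx v).

Lemma cont_gZ Z : continuous (gZ Z).
Proof.
have -> : gZ Z = fun v => \sum_i \sum_j (Z i j - vec_mx v i j) * (Z i j - vec_mx v i j).
  apply: funext => v; rewrite /gZ ipE; apply: eq_bigr => i _; apply: eq_bigr => j _.
  by rewrite !mxE.
apply: contS => i; apply: contS => j; apply: contM; apply: contD;
  (apply: contC || (apply: contN; apply: contVE)).
Qed.

Lemma cont_q (w : 'cV[R]_n) : continuous (fun v : V => (w^T *m vec_mx v *m w) 0 0).
Proof.
have -> : (fun v : V => (w^T *m vec_mx v *m w) 0 0) =
    fun v => \sum_j (\sum_i w i 0 * vec_mx v i j) * w j 0.
  apply: funext => v; rewrite mxE; apply: eq_bigr => j _; rewrite mxE; congr (_ * _).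
  by apply: eq_bigr => i _; rewrite mxE.
apply: contS => j; apply: contM; last exact: contC.
apply: contS => i; apply: contM; [exact: contC | exact: contVE].
Qed.

Lemma closed_of (h : V -> R) (c : R) : continuous h -> closed [set v | h v <= c].
Proof.
move=> ch; apply: (@preimage_closed _ _ h [set x | x <= c]); last exact: closed_le.
by move=> x _; exact: ch.
Qed.

Lemma closed_of_ge (h : V -> R) (c : R) : continuous h -> closed [set v | c <= h v].
Proof.
move=> ch; apply: (@preimage_closed _ _ h [set x | c <= x]); last exact: closed_ge.
by move=> x _; exact: ch.
Qed.

Lemma closed_of_eq (h : V -> R) (c : R) : continuous h -> closed [set v | h v = c].
Proof.
move=> ch; apply: (@preimage_closed _ _ h [set x | x = c]); last exact: closed_eq.
by move=> x _; exact: ch.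
Qed.

Lemma proj_exists (Z : 'M[R]_n) : exists P, is_proj Z P.
Proof.
pose A := [set v : V | psd (vec_mx v) /\ gZ Z v <= ip Z Z].
have Aeq : A = (\bigcap_(ij in [set: 'I_n * 'I_n]) [set v : V | vec_mx v ij.1 ij.2 - vec_mx v ij.2 ij.1 = 0])
   `&` (\bigcap_(w in [set: 'cV[R]_n]) [set v : V | 0 <= (w^T *m vec_mx v *m w) 0 0])
   `&` [set v | gZ Z v <= ip Z Z].
  apply/seteqP; split => v.
    move=> [[sv qv] gv]; split => //; split.
      by move=> [i j] _ /=; rewrite -{1}sv mxE subrr.
    by move=> w _; apply: qv.
  move=> [[sv qv] gv]; split => //; split => //.
    apply/matrixP => i j; rewrite mxE; apply/eqP; rewrite -subr_eq0; apply/eqP.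
    exact: (sv (j, i)).
  by move=> w; apply: qv.
have Acl : closed A.
  rewrite Aeq; apply: closedI; first apply: closedI.
  - apply: closed_bigI => -[i j] _; apply: closed_of_eq.
    by apply: contD; [apply: contVE | apply: contN; apply: contVE].
  - by apply: closed_bigI => w _; apply: closed_of_ge; apply: cont_q.
  - by apply: closed_of; apply: cont_gZ.
have Abd : bounded_set A.
  rewrite /bounded_set /= /bounded_near; near=> M => v [_ gv] /=.
  apply: (@le_trans _ _ (2 * frob Z)); last by near: M; apply: nbhs_pinfty_ge; rewrite num_real.
  rewrite /Num.norm /= mx_normrE; apply: bigmax_le; first by rewrite mulr_ge0 ?frob_ge0.
  move=> [i0 k] _ /=; rewrite (ord1 i0).
  case/mxvec_indexP: k => i j.
  have -> : v 0 (mxvec_index i j) = vec_mx v i j by rewrite mxE.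
  apply: le_trans (entry_le_frob _ i j) _.
  have -> : vec_mx v = Z - (Z - vec_mx v) by rewrite opprB addrC subrK.
  apply: le_trans (frobB _ _) _; rewrite mulr2n mulrDl mul1r lerD2l.
  by apply: frob_le.
have A0 : A !=set0.
  exists 0; rewrite /A /= /gZ linear0 subr0; split => //; exact: psd0.
have [c /set_mem [pc gc] cmin] := compact_EVT_min A0 (bounded_closed_compact Abd Acl)
   (continuous_subspaceT (@cont_gZ Z)).
exists (vec_mx c); split => // Q pQ; apply: frob_le.
have [gQ|gQ] := leP (gZ Z (mxvec Q)) (ip Z Z).
  have QA : mxvec Q \in A by apply/mem_set; split => //; rewrite mxvecK.
  by have := cmin _ QA; rewrite /gZ mxvecK.
apply: le_trans gc _; apply: ltW; move: gQ; by rewrite /gZ mxvecK.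
Unshelve. all: by end_near.
Qed.

End P3.

Section P4.
Variable R : realType.
Variables n m : nat.
Variable As : 'I_m -> 'M[R]_n.
Hypothesis sA : forall i, symm (As i).
Implicit Types X Y : 'M[R]_n.
Implicit Types y z : 'cV[R]_m.

Lemma inprodDr X Y W : inprod X (Y + W) = inprod X Y + inprod X W.
Proof. by rewrite /inprod mulmxDr mxtraceD. Qed.
Lemma inprodZr a X Y : inprod X (a *: Y) = a * inprod X Y.
Proof. by rewrite /inprod -scalemxAr mxtraceZ. Qed.
Lemma inprodC X Y : inprod X Y = inprod Y X.
Proof. exact: mxtrace_mulC. Qed.

Lemma Aop_D X Y : Aop As (X + Y) = Aop As X + Aop As Y.
Proof. by apply/matrixP => i j; rewrite !mxE inprodDr. Qed.
Lemma Aop_Z a X : Aop As (a *: X) = a *: Aop As X.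
Proof. by apply/matrixP => i j; rewrite !mxE inprodZr. Qed.
Lemma Aadj_D y z : Aadj As (y + z) = Aadj As y + Aadj As z.
Proof. by rewrite /Aadj -big_split; apply: eq_bigr => i _; rewrite mxE scalerDl. Qed.
Lemma Aadj_Z a y : Aadj As (a *: y) = a *: Aadj As y.
Proof. by rewrite /Aadj scaler_sumr; apply: eq_bigr => i _; rewrite mxE scalerA. Qed.
Lemma Pop_D X Y : Pop As (X + Y) = Pop As X + Pop As Y.
Proof. by rewrite /Pop Aop_D mulmxDr Aadj_D. Qed.
Lemma Pop_Z a X : Pop As (a *: X) = a *: Pop As X.
Proof. by rewrite /Pop Aop_Z -scalemxAr Aadj_Z. Qed.
Lemma Pop_N X : Pop As (- X) = - Pop As X.
Proof. by rewrite -scaleN1r Pop_Z scaleN1r. Qed.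
Lemma Pop_B X Y : Pop As (X - Y) = Pop As X - Pop As Y.
Proof. by rewrite Pop_D Pop_N. Qed.

Lemma Aadj_symm y : symm (Aadj As y).
Proof.
rewrite /symm /Aadj linear_sum /=.
by apply: eq_bigr => i _; rewrite linearZ /= sA.
Qed.
Lemma Pop_symm X : symm (Pop As X).
Proof. exact: Aadj_symm. Qed.

Lemma inprod_sumr X I (s : seq I) (F : I -> 'M[R]_n) :
  inprod X (\sum_(i <- s) F i) = \sum_(i <- s) inprod X (F i).
Proof.
elim: s => [|a s IH]; first by rewrite !big_nil /inprod mulmx0 mxtrace0.
by rewrite !big_cons inprodDr IH.
Qed.

Lemma inprod_adj y X : inprod (Aadj As y) X = \sum_i y i 0 * inprod (As i) X.
Proof.
by rewrite inprodC inprod_sumr; apply: eq_bigr => i _; rewrite inprodZr inprodC.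
Qed.

Lemma Aop_adj y : Aop As (Aadj As y) = gram As *m y.
Proof.
apply/matrixP => i j; rewrite (ord1 j) !mxE inprod_sumr; apply: eq_bigr => k _.
by rewrite inprodZr !mxE mulrC.
Qed.

Lemma gram_unit : A_surj As -> gram As \in unitmx.
Proof.
move=> surj; rewrite -row_free_unit; apply: inj_row_free => v vG.
set y := v^T.
have Gs : (gram As)^T = gram As.
  by apply/matrixP => i j; rewrite !mxE inprodC.
have Gy : gram As *m y = 0 by rewrite /y -Gs -trmx_mul vG trmx0.
have Ay : Aop As (Aadj As y) = 0 by rewrite Aop_adj.
have Ad0 : Aadj As y = 0.
  apply: ip_eq0; rewrite /ip Aadj_symm -/(inprod _ _) inprod_adj big1 // => i _.
  by have := congr1 (fun M : 'cV[R]_m => M i 0) Ay; rewrite !mxE => ->; rewrite mulr0.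
have [X [_ AX]] := surj y.
have E0 : \sum_i y i 0 * (Aop As X) i 0 = 0.
  rewrite (eq_bigr (fun i => y i 0 * inprod (As i) X)); last by move=> i _; rewrite [Aop _ _ _ _]mxE.
  by rewrite -inprod_adj Ad0 /inprod mul0mx mxtrace0.
move: E0; rewrite AX => /eqP; rewrite psumr_eq0; last by move=> i _; rewrite -expr2 sqr_ge0.
move=> /allP H; apply/matrixP => i j; rewrite (ord1 i) mxE.
have := H j (mem_index_enum _); rewrite implyTb mulf_eq0 orbb /y mxE => /eqP.
by [].
Qed.

Lemma Pop_adj y : A_surj As -> Pop As (Aadj As y) = Aadj As y.
Proof. by move=> surj; rewrite /Pop Aop_adj mulKmx // gram_unit. Qed.


Lemma admm_err (b : 'cV[R]_m) (C Xs Ss Z : 'M[R]_n) (ys : 'cV[R]_m) sigma :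
  A_surj As -> Aop As Xs = b -> Aadj As ys + Ss = C ->
  admm_step As b C sigma Z - (Xs - sigma *: Ss)
  = Pop As ((Z - (Xs - sigma *: Ss)) - 2%:R *: (projPSD Z - Xs)) + (projPSD Z - Xs).
Proof.
move=> surj AXs KC; rewrite /admm_step.
have -> : Aadj As (invmx (gram As) *m b) = Pop As Xs by rewrite /Pop AXs.
rewrite -KC; rewrite !(Pop_D, Pop_N, Pop_Z) Pop_adj //.
move: (Pop As (projPSD Z)) (Pop As Z) (Pop As Xs) (Pop As Ss) (Aadj As ys) (projPSD Z) => a1 a2 a3 a4 a5 a6.
apply/matrixP => i j; rewrite !mxE; ring.
Qed.

End P4.

Section P5.
Variable R : realType.
Variable n : nat.
Implicit Types X Y : 'M[R]_n.

Lemma frob_conj (U X : 'M[R]_n) : U^T *m U = 1%:M -> frob (U *m X *m U^T) = frob X.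
Proof.
move=> UU; rewrite /frob; congr Num.sqrt.
rewrite !trmx_mul trmxK.
rewrite -!mulmxA (mulmxA U^T U) UU mul1mx mxtrace_mulC -!mulmxA.
by rewrite UU mulmx1.
Qed.

Lemma frob_conjT (U X : 'M[R]_n) : U^T *m U = 1%:M -> frob (U^T *m X *m U) = frob X.
Proof.
move=> UU; have UU' : U^T^T *m U^T = 1%:M by rewrite trmxK; exact: mulmx1C.
by have := frob_conj X UU'; rewrite trmxK.
Qed.

Lemma psd_diag (M : 'M[R]_n) i : psd M -> 0 <= M i i.
Proof.
move=> [_ qM]; have := qM (delta_mx i 0).
rewrite trmx_delta -rowE -colE !mxE.
by [].
Qed.

Lemma tr_diag_mul (d : 'rV[R]_n) (M : 'M[R]_n) : \tr (diag_mx d *m M) = \sum_i d 0 i * M i i.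
Proof. by rewrite mul_diag_mx /mxtrace; apply: eq_bigr => i _; rewrite mxE. Qed.


Variable Qs : 'M[R]_n.
Variable lam : 'I_n -> R.
Variable r : nat.
Hypothesis QQ : Qs^T *m Qs = 1%:M.
Hypothesis lpos : forall i : 'I_n, (i < r)%N -> 0 < lam i.
Hypothesis lneg : forall i : 'I_n, (r <= i)%N -> lam i < 0.

Definition pv : 'rV[R]_n := \row_i (if (i < r)%N then lam i else 0).
Definition nv : 'rV[R]_n := \row_i (if (i < r)%N then 0 else - lam i).
Definition Kinv : R := \sum_i `|lam i|^-1.

Lemma Kinv_ge i : `|lam i|^-1 <= Kinv.
Proof.
rewrite /Kinv (bigD1 i) //= lerDl; apply: sumr_ge0 => k _.
by rewrite invr_ge0 normr_ge0.
Qed.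

Lemma scal_bound (x a g : R) : x != 0 -> a = - g / x -> `|x|^-1 <= Kinv -> `|a| <= Kinv * `|g|.
Proof.
move=> x0 -> xK; rewrite normrM normrN normrV ?unitfE // mulrC.
by rewrite ler_wpM2r ?normr_ge0.
Qed.

Lemma half_bound (E H G : 'M[R]_n) (i j : 'I_n) :
  (forall i j, pv 0 i * (E i j - H i j) + E i j * nv 0 j + G i j = 0) ->
  ~~ ((r <= i)%N && (j < r)%N) ->
  `|E i j - Omega r lam i j * H i j| <= Kinv * `|G i j|.
Proof.
move=> heq ij; have := heq i j; rewrite !mxE.
case: (ltnP i r) => ir; case: (ltnP j r) => jr //=.
- rewrite mulr0 addr0 => e.
  have l0 := lpos ir.
  apply: (@scal_bound (lam i)); first by rewrite gt_eqF.
    rewrite mul1r; apply: (@mulfI _ (lam i)); first by rewrite gt_eqF.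
    by rewrite [RHS]mulrCA mulfV ?gt_eqF // mulr1; lra.
  exact: Kinv_ge.
- have jr' : (j < r)%N = false by rewrite ltnNge jr.
  move=> e.
  have l0 := lpos ir; have l1 := lneg jr.
  apply: (@scal_bound (lam i - lam j)); first by rewrite gt_eqF // subr_gt0; lra.
    apply: (@mulfI _ (lam i - lam j)); first by rewrite gt_eqF // subr_gt0; lra.
    have xn : lam i - lam j != 0 by rewrite gt_eqF // subr_gt0; lra.
    rewrite [RHS]mulrCA mulfV // mulr1.
    have -> : (lam i - lam j) * (E i j - lam i / (lam i - lam j) * H i j)
       = (lam i - lam j) * E i j - lam i * H i j by field.
    lra.
  apply: le_trans (Kinv_ge i); rewrite lef_pV2 ?posrE ?normr_gt0 ?gt_eqF ?subr_gt0 //; try lra.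
  by rewrite !gtr0_norm ?subr_gt0 //; lra.
- by rewrite ir jr in ij.
- have ir' : (i < r)%N = false by rewrite ltnNge ir.
  have jr' : (j < r)%N = false by rewrite ltnNge jr.
  rewrite mul0r add0r => e.
  have l1 := lneg jr.
  apply: (@scal_bound (- lam j)); first by rewrite oppr_eq0 lt_eqF.
    rewrite mul0r subr0; apply: (@mulfI _ (- lam j)); first by rewrite oppr_eq0 lt_eqF.
    rewrite [RHS]mulrCA mulfV ?oppr_eq0 ?lt_eqF // mulr1; lra.
  by rewrite normrN; exact: Kinv_ge.
Qed.


Lemma Omega_sym (i j : 'I_n) : Omega r lam i j = Omega r lam j i.
Proof. by rewrite !mxE; case: (ltnP i r) => ir; case: (ltnP j r) => jr. Qed.

Lemma entry_bound (E H G : 'M[R]_n) : E^T = E -> H^T = H ->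
  (forall i j, pv 0 i * (E i j - H i j) + E i j * nv 0 j + G i j = 0) ->
  forall i j, `|E i j - Omega r lam i j * H i j| <= Kinv * (`|G i j| + `|G j i|).
Proof.
move=> sE sH heq i j.
have K0 : 0 <= Kinv by apply: le_trans (Kinv_ge i); rewrite invr_ge0 normr_ge0.
case h: ((r <= i)%N && (j < r)%N).
  have h' : ~~ ((r <= j)%N && (i < r)%N).
    by move: h => /andP [ri jr]; rewrite negb_and -ltnNge jr.
  have := half_bound heq h'.
  have -> : E j i = E i j by rewrite -{1}sE mxE.
  have -> : H j i = H i j by rewrite -{1}sH mxE.
  rewrite Omega_sym => H1; apply: le_trans H1 _.
  by rewrite ler_wpM2l // lerDr normr_ge0.
have := half_bound heq (negbT h) => H1; apply: le_trans H1 _.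
by rewrite ler_wpM2l // lerDl normr_ge0.
Qed.

Lemma prod_entry_bound (A B : 'M[R]_n) i j : `|(A *m B) i j| <= n%:R * (frob A * frob B).
Proof.
rewrite mxE; apply: le_trans (ler_norm_sum _ _ _) _.
have -> : n%:R * (frob A * frob B) = \sum_(k < n) (frob A * frob B).
  by rewrite sumr_const card_ord mulr_natl.
apply: ler_sum => k _.
by rewrite normrM ler_pM ?normr_ge0 ?entry_le_frob.
Qed.


Lemma diag_conj (d : 'rV[R]_n) : Qs^T *m (Qs *m diag_mx d *m Qs^T) *m Qs = diag_mx d.
Proof. by rewrite !mulmxA QQ mul1mx -mulmxA QQ mulmx1. Qed.

Lemma entry_eq (E1 H1 : 'M[R]_n) :
  (diag_mx pv + E1) *m (diag_mx nv + (E1 - H1)) = 0 ->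
  forall i j, pv 0 i * (E1 i j - H1 i j) + E1 i j * nv 0 j + (E1 *m (E1 - H1)) i j = 0.
Proof.
move=> h i j.
have -> : E1 i j - H1 i j = (E1 - H1) i j by rewrite !mxE.
move: (E1 - H1) h => F h.
rewrite mulmxDl !mulmxDr in h.
move: (E1 *m F) h => G h.
have := congr1 (fun M : 'M[R]_n => M i j) h.
rewrite !mul_diag_mx mul_mx_diag /= !mxE => e; rewrite ?mxE.
move: e; case: (i < r)%N; case: (i == j); rewrite /= ?mulr1n ?mulr0n; lra.
Qed.

Lemma final_bound (E1 H1 : 'M[R]_n) : E1^T = E1 -> H1^T = H1 ->
  (diag_mx pv + E1) *m (diag_mx nv + (E1 - H1)) = 0 ->
  frob (E1 - hadamard (Omega r lam) H1) <= (n * n * n)%:R * 2 * Kinv * (frob E1 * frob (E1 - H1)).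
Proof.
move=> sE sH h.
have K0 : 0 <= Kinv by rewrite /Kinv sumr_ge0 // => i _; rewrite invr_ge0 normr_ge0.
have eb := entry_bound sE sH (entry_eq h).
apply: le_trans (frob_le_sum _) _.
set c := Kinv * (2 * (n%:R * (frob E1 * frob (E1 - H1)))).
have bd : forall i j, `|(E1 - hadamard (Omega r lam) H1) i j| <= c.
  move=> i j.
  have -> : (E1 - hadamard (Omega r lam) H1) i j = E1 i j - Omega r lam i j * H1 i j.
    by rewrite /hadamard !mxE.
  apply: le_trans (eb i j) _; rewrite ler_wpM2l //.
  rewrite mulr2n mulrDl mul1r; apply: lerD; exact: prod_entry_bound.
apply: (@le_trans _ _ (\sum_(i < n) \sum_(j < n) c)).
  by apply: ler_sum => i _; apply: ler_sum => j _; apply: bd.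
rewrite !sumr_const !card_ord -mulrnA -[c *+ (n * n)]mulr_natl /c !natrM.
by rewrite le_eqVlt; apply/orP; left; apply/eqP; ring.
Qed.

Lemma mx_id1 (a b c d : 'M[R]_n) : a - (b - c) - (d - b) = (a - d) + c.
Proof. by apply/matrixP => i j; rewrite !mxE; ring. Qed.

Lemma mx_id2 (P Z Xs Sg : 'M[R]_n) : P - Z = Sg + (P - Xs) - (Z - (Xs - Sg)).
Proof. by apply/matrixP => i j; rewrite !mxE; ring. Qed.

Lemma local_est (Xs Sg P Z : 'M[R]_n) :
  Xs = Qs *m diag_mx pv *m Qs^T -> Sg = Qs *m diag_mx nv *m Qs^T ->
  symm Z -> is_proj Z P -> psd Xs -> ip Sg Xs = 0 ->
  frob ((P - Xs) - Dop Qs r lam (Z - (Xs - Sg)))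
    <= (n * n * n)%:R * 4 * Kinv * frob (Z - (Xs - Sg)) ^+ 2.
Proof.
move=> hXs hSg sZ prP pXs ipSX.
have QQ' : Qs *m Qs^T = 1%:M by apply: mulmx1C.
have K0 : 0 <= Kinv by rewrite /Kinv sumr_ge0 // => i _; rewrite invr_ge0 normr_ge0.
have sXs : Xs^T = Xs by case: pXs.
have sSg : Sg^T = Sg by rewrite hSg !trmx_mul trmxK tr_diag_mx mulmxA.
have sP : P^T = P by case: prP => -[].
set E := P - Xs; set H := Z - (Xs - Sg).
have sE : E^T = E by rewrite /E trB sP sXs.
have sH : H^T = H by rewrite /H !trB sZ sXs sSg.
have fEH : frob E <= frob H.
  have VI1 := proj_VI prP pXs.
  have ipSP : 0 <= ip Sg P.
    rewrite /ip sSg hSg -!mulmxA mxtrace_mulC -!mulmxA tr_diag_mul mulmxA.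
    apply: sumr_ge0 => i _.
    apply: mulr_ge0; first by rewrite mxE; case: ifP => // /negbT; rewrite -leqNgt => /lneg; lra.
    by apply: psd_diag; apply: psd_cong; case: prP.
  have eq1 : ip H E - ip E E = - ip (Z - P) (Xs - P) + ip Sg P - ip Sg Xs.
    rewrite -ipBl.
    have -> : H - E = (Z - P) + Sg.
      by rewrite /H /E mx_id1.
    rewrite /E -(opprB Xs P) ipDl !ipNr ipBr; ring.
  have am := ip_amgm H E ltr01; rewrite invr1 !mul1r in am.
  rewrite frob_leE; lra.
have PN := proj_compl sZ prP.
have hP : Qs^T *m P *m Qs = diag_mx pv + Qs^T *m E *m Qs.
  by rewrite /E mulmxBr mulmxBl hXs diag_conj addrC subrK.
have hN : Qs^T *m (P - Z) *m Qs = diag_mx nv + (Qs^T *m E *m Qs - Qs^T *m H *m Qs).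
  rewrite (mx_id2 P Z Xs Sg) -/E -/H mulmxBr mulmxBl mulmxDr mulmxDl hSg diag_conj.
  by rewrite addrA.
have prod0 : (diag_mx pv + Qs^T *m E *m Qs) *m
    (diag_mx nv + (Qs^T *m E *m Qs - Qs^T *m H *m Qs)) = 0.
  rewrite -hP -hN !mulmxA -(mulmxA _ Qs Qs^T) QQ' mulmx1 -(mulmxA Qs^T P (P - Z)) PN.
  by rewrite mulmx0 mul0mx.
have sE' : (Qs^T *m E *m Qs)^T = Qs^T *m E *m Qs by rewrite !trmx_mul trmxK sE mulmxA.
have sH' : (Qs^T *m H *m Qs)^T = Qs^T *m H *m Qs by rewrite !trmx_mul trmxK sH mulmxA.
have fb := final_bound sE' sH' prod0.
have -> : E - Dop Qs r lam H =
    Qs *m (Qs^T *m E *m Qs - hadamard (Omega r lam) (Qs^T *m H *m Qs)) *m Qs^T.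
  have eE : Qs *m (Qs^T *m E *m Qs) *m Qs^T = E.
    by rewrite !mulmxA QQ' mul1mx -mulmxA QQ' mulmx1.
  by rewrite /Dop [in RHS]mulmxBr [in RHS]mulmxBl eE.
rewrite frob_conj //; apply: le_trans fb _.
rewrite frob_conjT //.
have fF : frob (Qs^T *m E *m Qs - Qs^T *m H *m Qs) <= 2 * frob H.
  apply: le_trans (frobB _ _) _; rewrite !frob_conjT // mulr2n mulrDl mul1r.
  by rewrite lerD2r.
have c0 : 0 <= (n * n * n)%:R * 2 * Kinv by rewrite !mulr_ge0 // ler0n.
apply: (@le_trans _ _ ((n * n * n)%:R * 2 * Kinv * (frob H * (2 * frob H)))).
  by rewrite ler_wpM2l // ler_pM ?frob_ge0.
by rewrite le_eqVlt; apply/orP; left; apply/eqP; ring.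

Qed.
End P5.

Section P6.
Variable R : realType.
Variables n m : nat.
Implicit Types X Y H : 'M[R]_n.

Lemma projPSD_proj (Z : 'M[R]_n) : is_proj Z (projPSD Z).
Proof. exact: (xgetPex 0 (proj_exists Z)). Qed.

Lemma projPSD_symm (Z : 'M[R]_n) : symm (projPSD Z).
Proof. by case: (projPSD_proj Z) => -[]. Qed.

Lemma had_D (A X Y : 'M[R]_n) : hadamard A (X + Y) = hadamard A X + hadamard A Y.
Proof. by apply/matrixP => i j; rewrite !mxE mulrDr. Qed.
Lemma had_Z (A X : 'M[R]_n) a : hadamard A (a *: X) = a *: hadamard A X.
Proof. by apply/matrixP => i j; rewrite !mxE mulrCA. Qed.

Variables (Q : 'M[R]_n) (r : nat) (lam : 'I_n -> R).

Lemma Dop_D X Y : Dop Q r lam (X + Y) = Dop Q r lam X + Dop Q r lam Y.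
Proof. by rewrite /Dop mulmxDr mulmxDl had_D mulmxDr mulmxDl. Qed.
Lemma Dop_Z a X : Dop Q r lam (a *: X) = a *: Dop Q r lam X.
Proof. by rewrite /Dop -scalemxAr -scalemxAl had_Z -scalemxAr -scalemxAl. Qed.

Variable As : 'I_m -> 'M[R]_n.

Lemma Mop_D X Y : Mop As Q r lam (X + Y) = Mop As Q r lam X + Mop As Q r lam Y.
Proof.
rewrite /Mop /Pperp /Dperp !Dop_D !(Pop_D, Pop_N).
move: (Pop As X) (Pop As Y) (Pop As (Dop Q r lam X)) (Pop As (Dop Q r lam Y))
  (Dop Q r lam X) (Dop Q r lam Y) => a b c d e f.
by apply/matrixP => i j; rewrite !mxE; ring.
Qed.
Lemma Mop_Z a X : Mop As Q r lam (a *: X) = a *: Mop As Q r lam X.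
Proof.
rewrite /Mop /Pperp /Dperp !Dop_Z !(Pop_D, Pop_N, Pop_Z).
move: (Pop As X) (Pop As (Dop Q r lam X)) (Dop Q r lam X) => c d e.
by apply/matrixP => i j; rewrite !mxE; ring.
Qed.

Lemma Mop_err H E : Pop As (H - 2%:R *: E) + E =
  Mop As Q r lam H + ((E - Dop Q r lam H) - 2%:R *: Pop As (E - Dop Q r lam H)).
Proof.
rewrite /Mop /Pperp /Dperp !(Pop_D, Pop_N, Pop_Z).
move: (Pop As H) (Pop As E) (Pop As (Dop Q r lam H)) (Dop Q r lam H) => a b c d.
by apply/matrixP => i j; rewrite !mxE; ring.
Qed.

Lemma opnorm_bound : forall H, symm H ->
  frob (Mop As Q r lam H) <= opnorm (Mop As Q r lam) * frob H.
Proof.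
have [K [K0 hK]] := linear_bound Mop_D Mop_Z.
have M0 : Mop As Q r lam 0 = 0.
  by have := Mop_Z 0 0; rewrite !scale0r.
set S := [set frob (Mop As Q r lam H) | H in [set H : 'M[R]_n | symm H /\ frob H <= 1]].
have hS : has_sup S.
  split; first exists 0.
    exists 0; last by rewrite M0 frob0.
    by split; [rewrite /symm trmx0 | rewrite frob0].
  exists K => _ [H [_ fH] <-]; apply: le_trans (hK H) _.
  by rewrite -{2}(mulr1 K) ler_wpM2l.
move=> H sH.
have [H0|Hn0] := eqVneq (frob H) 0.
  by rewrite (frob_eq0 H0) M0 frob0 mulr0.
have fH : 0 < frob H by rewrite lt_neqAle eq_sym Hn0 frob_ge0.
have inS : S (frob (Mop As Q r lam ((frob H)^-1 *: H))).
  exists ((frob H)^-1 *: H) => //; split.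
    by rewrite /symm linearZ /= sH.
  by rewrite frobZ ger0_norm ?invr_ge0 ?frob_ge0 // mulVf.
have := sup_upper_bound hS inS.
rewrite Mop_Z frobZ ger0_norm ?invr_ge0 ?frob_ge0 //.
by rewrite ler_pdivrMl // mulrC.
Qed.

End P6.

Unset Implicit Arguments. Set Strict Implicit.

Theorem theorem3 (R : realType) (n m : nat)
  (C : 'M[R]_n) (As : 'I_m -> 'M[R]_n) (b : 'cV[R]_m) (sigma : R)
  (Z : nat -> 'M[R]_n)
  (Xs : 'M[R]_n) (ys : 'cV[R]_m) (Ss : 'M[R]_n)
  (Qs : 'M[R]_n) (lam : 'I_n -> R) (r : nat) :
  symm C -> (forall i, symm (As i)) ->
  A_surj As ->
  0 < sigma ->
  symm (Z 0%N) ->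
  (forall k, Z k.+1 = admm_step As b C sigma (Z k)) ->
  KKT As b C Xs ys Ss ->
  frob (Z k - (Xs - sigma *: Ss)) @[k --> \oo] --> 0 ->
  (\rank Xs + \rank Ss)%N = n ->
  (* spectral decomposition of Z* = Xs - sigma Ss *)
  Qs^T *m Qs = 1%:M ->
  (forall i j : 'I_n, (i <= j)%N -> lam j <= lam i) ->
  (forall i : 'I_n, (i < r)%N -> 0 < lam i) ->
  (forall i : 'I_n, (r <= i)%N -> lam i < 0) ->
  \rank Xs = r ->
  Xs - sigma *: Ss = Qs *m diag_mx (\row_i lam i) *m Qs^T ->
  Xs = Qs *m diag_mx (\row_i (if (i < r)%N then lam i else 0)) *m Qs^T ->
  sigma *: Ss = Qs *m diag_mx (\row_i (if (i < r)%N then 0 else - lam i)) *m Qs^T ->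
  (* primal nondegeneracy: N_X* ∩ range of Aadj = {0} *)
  (forall H y, in_NX Qs r H -> H = Aadj As y -> H = 0) ->
  (* dual nondegeneracy: N_S* ∩ N(A) = {0} *)
  (forall H, in_NS Qs r H -> Aop As H = 0 -> H = 0) ->
  forall rho : R, opnorm (Mop As Qs r lam) < rho -> rho < 1 ->
  exists kbar : nat, forall k : nat, (kbar <= k)%N ->
    frob (Z k.+1 - (Xs - sigma *: Ss)) <= rho * frob (Z k - (Xs - sigma *: Ss)).

Proof.
move=> sC sA surj sig0 sZ0 hstep [AXs KC ipXS pXs pSs] conv _ QQ _ lpos lneg _ hZs hXs hSs _ _
  rho hrho rho1.
have PS X : (Pop As X)^T = Pop As X := Pop_symm sA X.
have AS y : (Aadj As y)^T = Aadj As y := Aadj_symm sA y.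
have sXs : Xs^T = Xs by case: pXs.
have sSs : Ss^T = Ss by case: pSs.
have sZ : forall k, (Z k)^T = Z k.
  elim => // k IH; rewrite hstep /admm_step.
  have pS : (projPSD (Z k))^T = projPSD (Z k) := projPSD_symm (Z k).
  have sC' : C^T = C := sC.
  by rewrite !(trD, trN, trZ) !PS AS pS sC'.
have [KP [KP0 hKP]] := linear_bound (Pop_D As) (Pop_Z As).
set mu := opnorm (Mop As Qs r lam) in hrho *.
set c := (n * n * n)%:R * 4 * Kinv lam.
have c0 : 0 <= c.
  rewrite /c /Kinv !mulr_ge0 ?ler0n // sumr_ge0 // => i _; rewrite invr_ge0 normr_ge0.
set D := (2 * KP + 1) * c.
have D0 : 0 <= D by rewrite /D mulr_ge0 // addr_ge0 ?mulr_ge0.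
set eta := (rho - mu) / (D + 1).
have eta0 : 0 < eta by rewrite /eta divr_gt0 ?subr_gt0 //; lra.
have Deta : D * eta <= rho - mu.
  rewrite /eta mulrA ler_pdivrMr; last lra.
  have : 0 < rho - mu by rewrite subr_gt0.
  nra.
have ipSX : ip (sigma *: Ss) Xs = 0.
  by rewrite ipZl /ip sSs mxtrace_mulC -/(inprod Xs Ss) ipXS mulr0.
have := (cvgrPdist_le _ _).1 conv _ eta0 => -[N _ HN].
exists N => k Nk.
have fH : frob (Z k - (Xs - sigma *: Ss)) <= eta.
  by have := HN k Nk; rewrite /= sub0r normrN ger0_norm ?frob_ge0.
have sH : symm (Z k - (Xs - sigma *: Ss)).
  by rewrite /symm !(trB, trZ) sZ sXs sSs.
rewrite hstep (admm_err sA (Z k) sigma surj AXs KC) (Mop_err Qs r lam).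
apply: le_trans (frobD _ _) _.
have h1 := opnorm_bound Qs r lam As sH.
set W := projPSD (Z k) - Xs - Dop Qs r lam (Z k - (Xs - sigma *: Ss)).
have h2 : frob (W - 2%:R *: Pop As W) <= (2 * KP + 1) * frob W.
  apply: le_trans (frobB _ _) _; rewrite frobZ ger0_norm // .
  have := hKP W; nra.
have h3 : frob W <= c * frob (Z k - (Xs - sigma *: Ss)) ^+ 2.
  exact: (local_est QQ lpos lneg hXs hSs (sZ k) (projPSD_proj _) pXs ipSX).
move: h1 h2 h3 fH; rewrite -/mu; set h := frob (Z k - (Xs - sigma *: Ss)).
have h0 : 0 <= h by apply: frob_ge0.
move=> h1 h2 h3 fH.
have fW0 : 0 <= frob W by apply: frob_ge0.
have : (2 * KP + 1) * frob W <= D * (h * h).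
  by rewrite /D -mulrA ler_wpM2l ?addr_ge0 ?mulr_ge0 // -expr2.
have : D * (h * h) <= D * eta * h.
  by rewrite -mulrA ler_wpM2l // ler_wpM2r.
have : D * eta * h <= (rho - mu) * h by rewrite ler_wpM2r.
lra.
Qed.
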